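(* The pair $(\tau_1,\tau_2)$ on $H^2_{\mathbb D^2}$ does not have any non-trivial joint reducing subspace.
   Context: $H^2_{\mathbb D^2}$ is the Hardy space of the bidisc with orthonormal basis $\{z_1^{m_1}z_2^{m_2}\}_{m_1,m_2\ge0}$; $M_{z_1},M_{z_2}$ are the coordinate multiplication operators. $U$ is the unitary on $H^2_{\mathbb D^2}$ with $U(z_1^{m_1}z_2^{m_2})=z_1^{m_1+2}z_2^{m_2}$ if $m_1\ge m_2$, $=z_1^{m_1+1}z_2^{m_2-1}$ if $m_1+1=m_2$, $=z_1^{m_1}z_2^{m_2-2}$ if $m_1+2\le m_2$; $\tau_1=U^*M_{z_1}$, $\tau_2=M_{z_2}U$. A non-trivial joint reducing subspace is a closed subspace, different from $\{0\}$ and the whole space, reducing both operators. *)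

(* Defs.v *)
From Stdlib Require Import Reals Lia.
From Coquelicot Require Import Coquelicot.
Open Scope R_scope.

(* H^2 of the bidisc is identified, via its orthonormal basis
   e_(m1,m2) = z1^m1 z2^m2, with the space of square-summable complex
   coefficient families f : nat*nat -> C  (f (m1,m2) = <h, z1^m1 z2^m2>). *)
Definition vec := (nat * nat)%type -> C.

Fixpoint rsum (N : nat) (g : nat -> R) : R :=
  match N with O => 0 | S n => rsum n g + g n end.
Fixpoint csum (N : nat) (g : nat -> C) : C :=
  match N with O => 0%C | S n => Cplus (csum n g) (g n) end.

Definition rsq (N : nat) (h : (nat * nat)%type -> R) : R :=
  rsum N (fun i => rsum N (fun j => h (i, j))).
Definition csq (N : nat) (h : (nat * nat)%type -> C) : C :=
  csum N (fun i => csum N (fun j => h (i, j))).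

Definition l2 (f : vec) : Prop :=
  exists M : R, forall N, rsq N (fun p => Cmod (f p) ^ 2) <= M.

Definition l2conv (fn : nat -> vec) (f : vec) : Prop :=
  forall eps : R, 0 < eps -> exists K, forall n N, (K <= n)%nat ->
    rsq N (fun p => Cmod (fn n p - f p)%C ^ 2) <= eps.

Definition orth (f g : vec) : Prop :=
  is_lim_seq (fun N => Cmod (csq N (fun p => (f p * Cconj (g p))%C))) 0.

Definition zero_vec : vec := fun _ => 0%C.

Definition closed_subspace (S : vec -> Prop) : Prop :=
  (forall f, S f -> l2 f) /\
  S zero_vec /\
  (forall f g, S f -> S g -> S (fun p => (f p + g p)%C)) /\
  (forall (c : C) f, S f -> S (fun p => (c * f p)%C)) /\
  (forall fn f, (forall n, S (fn n)) -> l2 f -> l2conv fn f -> S f).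

Definition ortho_compl (S : vec -> Prop) : vec -> Prop :=
  fun g => l2 g /\ forall f, S f -> orth f g.

Definition invariant (T : vec -> vec) (S : vec -> Prop) : Prop :=
  forall f, S f -> S (T f).

Definition reduces (T : vec -> vec) (S : vec -> Prop) : Prop :=
  invariant T S /\ invariant T (ortho_compl S).

(* multiplication by z1, z2 (action on coefficients) *)
Definition Mz1 (f : vec) : vec := fun p =>
  match p with (O, _) => 0%C | (S k, m2) => f (k, m2) end.
Definition Mz2 (f : vec) : vec := fun p =>
  match p with (_, O) => 0%C | (m1, S k) => f (m1, k) end.

(* the basis permutation: U (z1^m1 z2^m2) = z1^(fst (sigma m)) z2^(snd (sigma m)) *)
Definition sigma (m : nat * nat) : nat * nat :=
  let (m1, m2) := m in
  if Nat.leb m2 m1 then (m1 + 2, m2)%nat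
  else if Nat.eqb (m1 + 1) m2 then (m1 + 1, m2 - 1)%nat
  else (m1, m2 - 2)%nat.

Definition sigma_inv (n : nat * nat) : nat * nat :=
  let (a, b) := n in
  if Nat.leb (b + 2) a then (a - 2, b)%nat
  else if Nat.eqb a (b + 1) then (a - 1, b + 1)%nat
  else (a, b + 2)%nat.

Lemma sigma_invK : forall n, sigma (sigma_inv n) = n.
Proof.
  intros [a b]; unfold sigma_inv, sigma.
  destruct (Nat.leb (b+2) a) eqn:H1.
  - apply Nat.leb_le in H1.
    replace (Nat.leb b (a-2)) with true by (symmetry; apply Nat.leb_le; lia).
    f_equal; lia.
  - apply Nat.leb_gt in H1. destruct (Nat.eqb a (b+1)) eqn:H2.
    + apply Nat.eqb_eq in H2.
      replace (Nat.leb (b+1) (a-1)) with false by (symmetry; apply Nat.leb_gt; lia).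
      replace (Nat.eqb (a-1+1) (b+1)) with true by (symmetry; apply Nat.eqb_eq; lia).
      f_equal; lia.
    + apply Nat.eqb_neq in H2.
      replace (Nat.leb (b+2) a) with false by (symmetry; apply Nat.leb_gt; lia).
      replace (Nat.eqb (a+1) (b+2)) with false by (symmetry; apply Nat.eqb_neq; lia).
      f_equal; lia.
Qed.

Lemma sigmaK : forall m, sigma_inv (sigma m) = m.
Proof.
  intros [m1 m2]; unfold sigma_inv, sigma.
  destruct (Nat.leb m2 m1) eqn:H1.
  - apply Nat.leb_le in H1.
    replace (Nat.leb (m2+2) (m1+2)) with true by (symmetry; apply Nat.leb_le; lia).
    f_equal; lia.
  - apply Nat.leb_gt in H1. destruct (Nat.eqb (m1+1) m2) eqn:H2.
    + apply Nat.eqb_eq in H2.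
      replace (Nat.leb (m2-1+2) (m1+1)) with false by (symmetry; apply Nat.leb_gt; lia).
      replace (Nat.eqb (m1+1) (m2-1+1)) with true by (symmetry; apply Nat.eqb_eq; lia).
      f_equal; lia.
    + apply Nat.eqb_neq in H2.
      replace (Nat.leb (m2-2+2) m1) with false by (symmetry; apply Nat.leb_gt; lia).
      replace (Nat.eqb m1 (m2-2+1)) with false by (symmetry; apply Nat.eqb_neq; lia).
      f_equal; lia.
Qed.

(* U (sum f_m e_m) = sum f_m e_(sigma m), i.e. (U f)(n) = f (sigma^-1 n);
   U^* = U^-1 : (U^* f)(m) = f (sigma m). *)
Definition Uop (f : vec) : vec := fun n => f (sigma_inv n).
Definition Uadj (f : vec) : vec := fun m => f (sigma m).

Definition tau1 (f : vec) : vec := Uadj (Mz1 f).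
Definition tau2 (f : vec) : vec := Mz2 (Uop f).

(* Main.v *)
Require Import Defs.
From Stdlib Require Import Reals.
From Coquelicot Require Import Coquelicot.
From Stdlib Require Import Lia Lra Psatz FunctionalExtensionality ClassicalEpsilon Classical.
Open Scope R_scope.

Lemma rsum_ext N g h : (forall i, (i < N)%nat -> g i = h i) -> rsum N g = rsum N h.
Proof. induction N; simpl; intros H; auto. rewrite IHN by (intros; apply H; lia). rewrite H by lia. auto. Qed.
Lemma rsum_plus N g h : rsum N (fun i => g i + h i) = rsum N g + rsum N h.
Proof. induction N; simpl; [lra|]. rewrite IHN. lra. Qed.
Lemma rsum_scal N c g : rsum N (fun i => c * g i) = c * rsum N g.
Proof. induction N; simpl; [lra|]. rewrite IHN. lra. Qed.
Lemma rsum_le N g h : (forall i, g i <= h i) -> rsum N g <= rsum N h.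
Proof. induction N; simpl; intros H; [lra|]. specialize (IHN H). specialize (H N). lra. Qed.
Lemma rsum_nonneg N g : (forall i, 0 <= g i) -> 0 <= rsum N g.
Proof. induction N; simpl; intros H; [lra|]. specialize (IHN H). specialize (H N). lra. Qed.
Lemma rsum_mono N M g : (forall i, 0 <= g i) -> (N <= M)%nat -> rsum N g <= rsum M g.
Proof. intros H HNM. induction HNM; [lra|]. simpl. specialize (H m). lra. Qed.
Lemma rsum_zero N g : (forall i, (i < N)%nat -> g i = 0) -> rsum N g = 0.
Proof. induction N; simpl; intros H; auto. rewrite IHN by (intros; apply H; lia). rewrite H by lia. lra. Qed.
Lemma rsum_single N g k : (forall i, i <> k -> g i = 0) -> (k < N)%nat -> rsum N g = g k.
Proof.
  induction N; simpl; intros H Hk; [lia|].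
  destruct (Nat.eq_dec N k).
  - subst. rewrite rsum_zero. lra. intros; apply H; lia.
  - rewrite IHN by (auto; lia). rewrite (H N) by auto. lra.
Qed.
Lemma rsum_term N g k : (forall i, 0 <= g i) -> (k < N)%nat -> g k <= rsum N g.
Proof.
  induction N; simpl; intros H Hk; [lia|].
  destruct (Nat.eq_dec N k).
  - subst. assert (0 <= rsum k g) by (apply rsum_nonneg; auto). lra.
  - assert (g k <= rsum N g) by (apply IHN; auto; lia). specialize (H N). lra.
Qed.
Lemma rsum_lim N (g : nat -> nat -> R) (l : nat -> R) :
  (forall i, is_lim_seq (fun n => g n i) (l i)) -> is_lim_seq (fun n => rsum N (g n)) (rsum N l).
Proof.
  intros H. induction N; simpl.
  - apply is_lim_seq_const.
  - apply (is_lim_seq_plus' _ _ _ _ IHN (H N)).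
Qed.
Lemma fst_csum N g : fst (csum N g) = rsum N (fun i => fst (g i)).
Proof. induction N; simpl; auto. rewrite IHN; auto. Qed.
Lemma snd_csum N g : snd (csum N g) = rsum N (fun i => snd (g i)).
Proof. induction N; simpl; auto. rewrite IHN; auto. Qed.

Lemma rsq_ext N h g : (forall p, (fst p < N)%nat -> (snd p < N)%nat -> h p = g p) -> rsq N h = rsq N g.
Proof. intros H. unfold rsq. apply rsum_ext; intros i Hi. apply rsum_ext; intros j Hj. apply H; simpl; auto. Qed.
Lemma rsq_ext' N h g : (forall p, h p = g p) -> rsq N h = rsq N g.
Proof. intros; apply rsq_ext; auto. Qed.
Lemma rsq_plus N h g : rsq N (fun p => h p + g p) = rsq N h + rsq N g.
Proof. unfold rsq. rewrite <- rsum_plus. apply rsum_ext; intros. apply rsum_plus. Qed.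
Lemma rsq_scal N c h : rsq N (fun p => c * h p) = c * rsq N h.
Proof. unfold rsq. rewrite <- rsum_scal. apply rsum_ext; intros. apply rsum_scal. Qed.
Lemma rsq_le N h g : (forall p, h p <= g p) -> rsq N h <= rsq N g.
Proof. intros H. unfold rsq. apply rsum_le; intros. apply rsum_le; intros; auto. Qed.
Lemma rsq_nonneg N h : (forall p, 0 <= h p) -> 0 <= rsq N h.
Proof. intros H. unfold rsq. apply rsum_nonneg; intros. apply rsum_nonneg; auto. Qed.
Lemma rsq_mono N M h : (forall p, 0 <= h p) -> (N <= M)%nat -> rsq N h <= rsq M h.
Proof.
  intros H HNM. unfold rsq.
  apply Rle_trans with (rsum N (fun i => rsum M (fun j => h (i, j)))).
  - apply rsum_le; intros. apply rsum_mono; auto.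
  - apply rsum_mono; auto. intros; apply rsum_nonneg; auto.
Qed.
Lemma rsq_term N h p : (forall p, 0 <= h p) -> (fst p < N)%nat -> (snd p < N)%nat -> h p <= rsq N h.
Proof.
  intros H H1 H2. destruct p as [a b]. unfold rsq. simpl in *.
  apply Rle_trans with (rsum N (fun j => h (a, j))).
  - apply (rsum_term N (fun j => h (a,j)) b); auto.
  - apply (rsum_term N (fun i => rsum N (fun j => h (i, j))) a); auto.
    intros; apply rsum_nonneg; auto.
Qed.
Lemma rsq_single N h p : (forall q, q <> p -> h q = 0) -> (fst p < N)%nat -> (snd p < N)%nat -> rsq N h = h p.
Proof.
  intros H H1 H2. destruct p as [a b]. unfold rsq. simpl in *.
  rewrite (rsum_single N _ a); auto.
  - apply (rsum_single N (fun j => h (a, j)) b); auto. intros j Hj. apply H. intros E; inversion E; auto.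
  - intros i Hi. apply rsum_zero. intros j _. apply H. intros E; inversion E; auto.
Qed.
Lemma rsq_lim N (g : nat -> (nat*nat)%type -> R) (l : (nat*nat)%type -> R) :
  (forall p, is_lim_seq (fun n => g n p) (l p)) -> is_lim_seq (fun n => rsq N (g n)) (rsq N l).
Proof.
  intros H. unfold rsq. apply (rsum_lim N (fun n i => rsum N (fun j => g n (i,j)))).
  intros i. apply (rsum_lim N (fun n j => g n (i,j))). intros; apply H.
Qed.
Lemma fst_csq N h : fst (csq N h) = rsq N (fun p => fst (h p)).
Proof. unfold csq, rsq. rewrite fst_csum. apply rsum_ext; intros. apply fst_csum. Qed.
Lemma snd_csq N h : snd (csq N h) = rsq N (fun p => snd (h p)).
Proof. unfold csq, rsq. rewrite snd_csum. apply rsum_ext; intros. apply snd_csum. Qed.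

Definition nq (z : C) : R := fst z ^ 2 + snd z ^ 2.
Lemma nq_nonneg z : 0 <= nq z.
Proof. unfold nq; nra. Qed.
Lemma Cmod2 z : Cmod z ^ 2 = nq z.
Proof. unfold Cmod, nq. rewrite pow2_sqrt; [reflexivity| nra]. Qed.
Definition S2 N (f : vec) := rsq N (fun p => nq (f p)).
Definition L2 (f : vec) := exists M, forall N, S2 N f <= M.
Lemma l2_L2 f : l2 f <-> L2 f.
Proof.
  unfold l2, L2, S2. split; intros [M H]; exists M; intros N; specialize (H N);
  (erewrite rsq_ext'; [apply H|]); intros; simpl; try rewrite Cmod2; try rewrite <- Cmod2; auto.
Qed.
Lemma S2_nonneg f N : 0 <= S2 N f.
Proof. apply rsq_nonneg; intros; apply nq_nonneg. Qed.
Lemma S2_mono f N M : (N <= M)%nat -> S2 N f <= S2 M f.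
Proof. intros; apply rsq_mono; auto; intros; apply nq_nonneg. Qed.
Lemma S2_ext f g N : (forall p, f p = g p) -> S2 N f = S2 N g.
Proof. intros H; apply rsq_ext'; intros; rewrite H; auto. Qed.
Lemma L2_ext f g : (forall p, f p = g p) -> L2 f -> L2 g.
Proof. intros H [M HM]; exists M; intros N; rewrite <- (S2_ext f g) by auto; auto. Qed.
Lemma nq_add w z : nq (w + z)%C <= 2 * nq w + 2 * nq z.
Proof. destruct w as [a b], z as [c d]; unfold nq; simpl. pose proof (pow2_ge_0 (a - c)); pose proof (pow2_ge_0 (b - d)). nra. Qed.
Lemma nq_mul a u : nq (a * u)%C = nq a * nq u.
Proof. unfold nq; simpl. ring. Qed.
Lemma L2_comb f g a b : L2 f -> L2 g -> L2 (fun p => a * f p + b * g p)%C.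
Proof.
  intros [M1 H1] [M2 H2]. exists (2 * nq a * M1 + 2 * nq b * M2). intros N.
  unfold S2. eapply Rle_trans.
  { apply rsq_le. intros p. apply nq_add. }
  rewrite rsq_plus, !rsq_scal.
  erewrite (rsq_ext' N (fun p => nq (a * f p)%C)) by (intros; apply nq_mul).
  erewrite (rsq_ext' N (fun p => nq (b * g p)%C)) by (intros; apply nq_mul).
  rewrite !rsq_scal. specialize (H1 N). specialize (H2 N). unfold S2 in *.
  pose proof (nq_nonneg a). pose proof (nq_nonneg b). nra.
Qed.
Ltac ceq := intros; apply injective_projections; simpl; field.
Lemma L2_sub f g : L2 f -> L2 g -> L2 (fun p => f p - g p)%C.
Proof.
  intros. eapply L2_ext; [| apply (L2_comb f g 1 (-1)); auto]. ceq.
Qed.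
Lemma L2_add f g : L2 f -> L2 g -> L2 (fun p => f p + g p)%C.
Proof.
  intros. eapply L2_ext; [| apply (L2_comb f g 1 1); auto]. ceq.
Qed.

Lemma lim_le u (l : R) K c : is_lim_seq u l -> (forall n, (K <= n)%nat -> u n <= c) -> l <= c.
Proof.
  intros H1 H2. assert (H := is_lim_seq_le_loc u (fun _ => c) l c).
  simpl in H. apply H; auto. exists K; auto. apply is_lim_seq_const.
Qed.
Lemma lim_ge u (l : R) K c : is_lim_seq u l -> (forall n, (K <= n)%nat -> c <= u n) -> c <= l.
Proof.
  intros H1 H2. assert (H := is_lim_seq_le_loc (fun _ => c) u c l).
  simpl in H. apply H; auto. exists K; auto. apply is_lim_seq_const.
Qed.
Lemma lim_unique u (l1 l2 : R) : is_lim_seq u l1 -> is_lim_seq u l2 -> l1 = l2.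
Proof.
  intros H1 H2. apply is_lim_seq_unique in H1. apply is_lim_seq_unique in H2.
  rewrite H1 in H2. inversion H2; auto.
Qed.

Definition nn f := real (Lim_seq (fun N => S2 N f)).
Lemma nn_lim f : L2 f -> is_lim_seq (fun N => S2 N f) (nn f).
Proof.
  intros [M HM].
  destruct (ex_finite_lim_seq_incr (fun N => S2 N f) M) as [l Hl].
  - intros; apply S2_mono; lia.
  - auto.
  - unfold nn. rewrite (is_lim_seq_unique _ _ Hl). simpl. auto.
Qed.
Lemma nn_ge f N : L2 f -> S2 N f <= nn f.
Proof. intros H. apply (lim_ge _ _ N _ (nn_lim f H)). intros; apply S2_mono; auto. Qed.
Lemma nn_le f c : L2 f -> (forall N, S2 N f <= c) -> nn f <= c.
Proof. intros H H2. apply (lim_le _ _ 0 _ (nn_lim f H)). auto. Qed.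
Lemma nn_nonneg f : L2 f -> 0 <= nn f.
Proof. intros H. eapply Rle_trans; [apply (S2_nonneg f 0)| apply nn_ge; auto]. Qed.

Lemma lim0_abs_le u v : (forall n, Rabs (u n) <= v n) -> is_lim_seq v 0 -> is_lim_seq u 0.
Proof.
  intros H Hv. apply is_lim_seq_le_le with (u := fun n => - v n) (w := v); auto.
  - intros n; specialize (H n). revert H; unfold Rabs; destruct (Rcase_abs (u n)); intros; lra.
  - replace (Finite 0) with (Rbar_opp 0) by (simpl; f_equal; ring).
    apply (is_lim_seq_opp v 0); auto.
Qed.
Lemma abs_lim0 u : is_lim_seq (fun n => Rabs (u n)) 0 -> is_lim_seq u 0.
Proof. intros H. apply (lim0_abs_le u (fun n => Rabs (u n))); auto; intros; lra. Qed.
Lemma Cmod_le_sum z : Cmod z <= Rabs (fst z) + Rabs (snd z).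
Proof.
  unfold Cmod. rewrite <- (sqrt_pow2 (Rabs (fst z) + Rabs (snd z))).
  - apply sqrt_le_1_alt. destruct z as [a b]; simpl.
    pose proof (Rabs_pos a); pose proof (Rabs_pos b).
    rewrite <- (pow2_abs a), <- (pow2_abs b) at 1. nra.
  - pose proof (Rabs_pos (fst z)); pose proof (Rabs_pos (snd z)); lra.
Qed.
Lemma fst_le_Cmod z : Rabs (fst z) <= Cmod z.
Proof.
  unfold Cmod. rewrite <- (sqrt_pow2 (Rabs (fst z))) by apply Rabs_pos.
  apply sqrt_le_1_alt. rewrite pow2_abs. pose proof (pow2_ge_0 (snd z)). lra.
Qed.
Lemma snd_le_Cmod z : Rabs (snd z) <= Cmod z.
Proof.
  unfold Cmod. rewrite <- (sqrt_pow2 (Rabs (snd z))) by apply Rabs_pos.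
  apply sqrt_le_1_alt. rewrite pow2_abs. pose proof (pow2_ge_0 (fst z)). lra.
Qed.

Definition Xs N (f g : vec) := rsq N (fun p => fst (f p) * fst (g p) + snd (f p) * snd (g p)).
Definition Ys N (f g : vec) := rsq N (fun p => snd (f p) * fst (g p) - fst (f p) * snd (g p)).
Lemma orth_iff f g : orth f g <-> is_lim_seq (fun N => Xs N f g) 0 /\ is_lim_seq (fun N => Ys N f g) 0.
Proof.
  unfold orth.
  assert (E1 : forall N, fst (csq N (fun p => (f p * Cconj (g p))%C)) = Xs N f g).
  { intros. rewrite fst_csq. apply rsq_ext'. intros; simpl; ring. }
  assert (E2 : forall N, snd (csq N (fun p => (f p * Cconj (g p))%C)) = Ys N f g).
  { intros. rewrite snd_csq. apply rsq_ext'. intros; simpl; ring. }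
  split.
  - intros H. split.
    + apply (lim0_abs_le _ _ (fun N => ltac:(rewrite <- E1; apply fst_le_Cmod)) H).
    + apply (lim0_abs_le _ _ (fun N => ltac:(rewrite <- E2; apply snd_le_Cmod)) H).
  - intros [H1 H2].
    apply (lim0_abs_le _ (fun N => Rabs (Xs N f g) + Rabs (Ys N f g))).
    + intros N. rewrite Rabs_pos_eq by apply Cmod_ge_0. rewrite <- E1, <- E2. apply Cmod_le_sum.
    + replace (Finite 0) with (Finite (0 + 0)) by (f_equal; ring).
      apply is_lim_seq_plus'; apply is_lim_seq_abs in H1; apply is_lim_seq_abs in H2;
      simpl in *; rewrite Rabs_R0 in *; auto.
Qed.

Definition rr (n : nat) : R := / (INR n + 1).
Lemma rr_pos n : 0 < rr n.
Proof. unfold rr. apply Rinv_0_lt_compat. pose proof (pos_INR n); lra. Qed.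
Lemma rr_anti n k : (k <= n)%nat -> rr n <= rr k.
Proof.
  intros H. unfold rr. apply Rinv_le_contravar. pose proof (pos_INR k); lra.
  apply le_INR in H. lra.
Qed.
Lemma rr_small eps : 0 < eps -> exists K, rr K < eps.
Proof.
  intros H. destruct (archimed_cor1 eps H) as [N [H1 H2]]. exists N.
  unfold rr. eapply Rle_lt_trans; [|apply H1]. apply Rinv_le_contravar.
  apply lt_0_INR; auto. lra.
Qed.

Lemma lim_scal u (a c : R) : is_lim_seq u a -> is_lim_seq (fun n => c * u n) (c * a).
Proof. intros H. apply (is_lim_seq_mult' (fun _ => c) u c a); auto. apply is_lim_seq_const. Qed.
Lemma lim_sq u (a : R) : is_lim_seq u a -> is_lim_seq (fun n => (u n)^2) (a^2).
Proof.
  intros H. apply is_lim_seq_ext with (fun n => u n * u n). intros; ring.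
  replace (a^2) with (a * a) by ring. apply is_lim_seq_mult'; auto.
Qed.
Lemma lim_real u (l : R) : is_lim_seq u l -> is_lim_seq u (real (Lim_seq u)).
Proof. intros H. rewrite (is_lim_seq_unique _ _ H). simpl; auto. Qed.

Lemma S2_lim_sub N (y : vec) (g : nat -> vec) (h : vec) :
  (forall p, is_lim_seq (fun n => fst (g n p)) (fst (h p))) ->
  (forall p, is_lim_seq (fun n => snd (g n p)) (snd (h p))) ->
  is_lim_seq (fun n => S2 N (fun p => y p - g n p)%C) (S2 N (fun p => y p - h p)%C).
Proof.
  intros H1 H2. unfold S2. apply (rsq_lim N (fun n p => nq (y p - g n p)%C)). intros p. unfold nq; simpl.
  apply is_lim_seq_plus'; apply lim_sq.
  - exact (is_lim_seq_minus' _ _ _ _ (is_lim_seq_const (fst (y p))) (H1 p)).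
  - exact (is_lim_seq_minus' _ _ _ _ (is_lim_seq_const (snd (y p))) (H2 p)).
Qed.

Lemma cauchy_lim u : (forall n k, (u n - u k)^2 <= 2 * rr n + 2 * rr k) -> exists l : R, is_lim_seq u l.
Proof.
  intros H. apply ex_lim_seq_cauchy_corr. intros [eps Heps]. simpl.
  assert (He2 : 0 < eps^2 / 4) by (apply Rdiv_lt_0_compat; nra).
  destruct (rr_small _ He2) as [K HK]. exists K. intros n m Hn Hm.
  specialize (H n m). pose proof (rr_anti _ _ Hn). pose proof (rr_anti _ _ Hm).
  assert (Hsq : (u n - u m)^2 < eps^2) by lra.
  apply Rabs_def1; nra.
Qed.

Lemma S_ext (S : vec -> Prop) f g : (forall p, f p = g p) -> S f -> S g.
Proof. intros H Hf. replace g with f; auto. apply functional_extensionality; auto. Qed.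
Lemma S_lin S f g a b : closed_subspace S -> S f -> S g -> S (fun p => a * f p + b * g p)%C.
Proof.
  intros [_ [_ [Hadd [Hsc _]]]] Hf Hg.
  exact (Hadd (fun p => a * f p)%C (fun p => b * g p)%C (Hsc a f Hf) (Hsc b g Hg)).
Qed.

Lemma proj_thm S x : closed_subspace S -> L2 x ->
  exists a, S a /\ L2 (fun p => x p - a p)%C /\ forall t, S t -> orth t (fun p => x p - a p)%C.
Proof.
  intros HS Hx. pose proof HS as [Hl2 [H0 [Hadd [Hsc Hcl]]]].
  assert (HL2S : forall s, S s -> L2 s) by (intros; apply l2_L2; auto).
  set (D := fun s => nn (fun p => x p - s p)%C).
  assert (HLd : forall s, S s -> L2 (fun p => x p - s p)%C) by (intros; apply L2_sub; auto).
  set (E := fun r => exists s, S s /\ r = - D s).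
  destruct (completeness E) as [l [Hub Hlub]].
  { exists 0. intros r [s [Hs ->]]. pose proof (nn_nonneg _ (HLd s Hs)). unfold D. lra. }
  { exists (- D zero_vec). exists zero_vec; auto. }
  set (d := -l).
  assert (Hi : forall s, S s -> d <= D s).
  { intros s Hs. assert (- D s <= l) by (apply Hub; exists s; auto). unfold d; lra. }
  assert (Hii : forall eps, 0 < eps -> exists s, S s /\ D s < d + eps).
  { intros eps He. apply NNPP; intro Hn. assert (l <= l - eps); [|lra].
    apply Hlub. intros r [s [Hs ->]]. destruct (Rlt_le_dec (D s) (d + eps)) as [Hlt|Hle].
    - exfalso; apply Hn; eauto.
    - unfold d in *; lra. }
  set (sn := fun n => proj1_sig (constructive_indefinite_description _ (Hii (rr n) (rr_pos n)))).
  assert (Hsn : forall n, S (sn n) /\ D (sn n) < d + rr n).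
  { intros; unfold sn; destruct constructive_indefinite_description; simpl; auto. }
  assert (Hc : forall n k N, S2 N (fun p => sn n p - sn k p)%C <= 2 * rr n + 2 * rr k).
  { intros n k N. destruct (Hsn n) as [Sn Dn], (Hsn k) as [Sk Dk].
    set (m := fun p => (/2 * sn n p + /2 * sn k p)%C).
    assert (Sm : S m) by (apply S_lin; auto).
    pose proof (Hi m Sm) as Dm.
    assert (Heq : forall N', S2 N' (fun p => sn n p - sn k p)%C =
       2 * S2 N' (fun p => x p - sn n p)%C + 2 * S2 N' (fun p => x p - sn k p)%C
       + (-4) * S2 N' (fun p => x p - m p)%C).
    { intros N'. unfold S2. rewrite <- !rsq_scal, <- !rsq_plus. apply rsq_ext'.
      intros p. unfold m, nq; simpl. field. }
    assert (Lsub : L2 (fun p => sn n p - sn k p)%C) by (apply L2_sub; auto).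
    assert (Hlim : nn (fun p => sn n p - sn k p)%C = 2 * D (sn n) + 2 * D (sn k) + (-4) * D m).
    { apply (lim_unique (fun N' => S2 N' (fun p => sn n p - sn k p)%C)).
      - apply nn_lim; auto.
      - apply is_lim_seq_ext with (fun N' => 2 * S2 N' (fun p => x p - sn n p)%C + 2 * S2 N' (fun p => x p - sn k p)%C
       + (-4) * S2 N' (fun p => x p - m p)%C). { intros; rewrite Heq; auto. }
        apply is_lim_seq_plus'; [apply is_lim_seq_plus'|]; apply lim_scal; apply nn_lim; auto. }
    pose proof (nn_ge _ N Lsub). lra. }
  assert (Hpt : forall p n k, nq (sn n p - sn k p)%C <= 2 * rr n + 2 * rr k).
  { intros p n k. eapply Rle_trans; [|apply (Hc n k (Nat.succ (max (fst p) (snd p))))].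
    unfold S2. apply (rsq_term _ (fun p => nq (sn n p - sn k p)%C)); [intros; apply nq_nonneg| apply Nat.lt_succ_r, Nat.le_max_l | apply Nat.lt_succ_r, Nat.le_max_r]. }
  set (sinf := fun p => (real (Lim_seq (fun n => fst (sn n p))), real (Lim_seq (fun n => snd (sn n p))))).
  assert (Hf : forall p, is_lim_seq (fun n => fst (sn n p)) (fst (sinf p))).
  { intros p. unfold sinf; simpl. destruct (cauchy_lim (fun n => fst (sn n p))) as [l0 Hl0].
    - intros n k. eapply Rle_trans; [|apply (Hpt p n k)]. unfold nq; simpl.
      pose proof (pow2_ge_0 (snd (sn n p) + - snd (sn k p))). unfold Rminus. lra.
    - eapply lim_real; eauto. }
  assert (Hs : forall p, is_lim_seq (fun n => snd (sn n p)) (snd (sinf p))).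
  { intros p. unfold sinf; simpl. destruct (cauchy_lim (fun n => snd (sn n p))) as [l0 Hl0].
    - intros n k. eapply Rle_trans; [|apply (Hpt p n k)]. unfold nq; simpl.
      pose proof (pow2_ge_0 (fst (sn n p) + - fst (sn k p))). unfold Rminus. lra.
    - eapply lim_real; eauto. }
  assert (Hconv : forall n N, S2 N (fun p => sn n p - sinf p)%C <= 4 * rr n).
  { intros n N. apply (lim_le _ _ n _ (S2_lim_sub N (sn n) sn sinf Hf Hs)).
    intros k Hk. pose proof (Hc n k N). pose proof (rr_anti _ _ Hk). lra. }
  assert (Lsinf : L2 sinf).
  { assert (L2 (fun p => sn 0%nat p - sinf p)%C) by (exists (4 * rr 0); auto).
    eapply L2_ext; [|apply (L2_comb (sn 0%nat) (fun p => sn 0%nat p - sinf p)%C 1 (-1)); [apply HL2S, Hsn| eauto]].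
    ceq. }
  assert (Ssinf : S sinf).
  { apply (Hcl sn sinf); [intros; apply Hsn| apply l2_L2; auto|].
    intros eps He. assert (He4 : 0 < eps / 4) by lra. destruct (rr_small _ He4) as [K HK].
    exists K. intros n N Hn. pose proof (Hconv n N). pose proof (rr_anti _ _ Hn).
    unfold S2 in H. erewrite rsq_ext'; [|intros; apply Cmod2]. lra. }
  assert (Hb : D sinf <= d).
  { apply nn_le. apply HLd; auto. intros N. apply le_epsilon. intros eps He.
    destruct (rr_small _ He) as [K HK].
    apply (lim_le _ _ K _ (S2_lim_sub N x sn sinf Hf Hs)).
    intros n Hn. destruct (Hsn n) as [Sn Dn]. pose proof (nn_ge _ N (HLd _ Sn)).
    pose proof (rr_anti _ _ Hn). unfold D in *. lra. }
  exists sinf. split; [auto|]. split; [apply HLd; auto|].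
  intros t St. set (b := fun p => (x p - sinf p)%C).
  assert (Lt : L2 t) by auto. assert (Lb : L2 b) by (apply HLd; auto).
  set (s' := fun l1 l2 => fun p => (sinf p + (l1, l2) * t p)%C).
  assert (Ss' : forall l1 l2, S (s' l1 l2)).
  { intros. exact (Hadd sinf (fun p => ((l1,l2) * t p)%C) Ssinf (Hsc (l1,l2) t St)). }
  assert (Hid : forall l1 l2 N, S2 N (fun p => x p - s' l1 l2 p)%C =
     S2 N b + (-2 * l1) * Xs N t b + (2 * l2) * Ys N t b + (l1^2 + l2^2) * S2 N t).
  { intros. unfold S2, Xs, Ys. rewrite <- !rsq_scal, <- !rsq_plus. apply rsq_ext'.
    intros p. unfold s', b, nq; simpl. ring. }
  set (X := /2 * (nn b + nn t - D (s' 1 0))).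
  set (Y := /2 * (D (s' 0 1) - nn b - nn t)).
  assert (LX : is_lim_seq (fun N => Xs N t b) X).
  { apply is_lim_seq_ext with (fun N => /2 * (S2 N b + S2 N t - S2 N (fun p => x p - s' 1 0 p)%C)).
    { intros N. rewrite Hid. field. }
    apply lim_scal. apply is_lim_seq_minus'; [apply is_lim_seq_plus'|]; apply nn_lim; auto. }
  assert (LY : is_lim_seq (fun N => Ys N t b) Y).
  { apply is_lim_seq_ext with (fun N => /2 * (S2 N (fun p => x p - s' 0 1 p)%C - S2 N b - S2 N t)).
    { intros N. rewrite Hid. field. }
    apply lim_scal. apply is_lim_seq_minus'; [apply is_lim_seq_minus'|]; apply nn_lim; auto. }
  assert (Hvar : forall l1 l2, 0 <= (-2 * l1) * X + (2 * l2) * Y + (l1^2 + l2^2) * nn t).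
  { intros l1 l2.
    assert (E1 : D (s' l1 l2) = nn b + (-2 * l1) * X + (2 * l2) * Y + (l1^2 + l2^2) * nn t).
    { apply (lim_unique (fun N => S2 N (fun p => x p - s' l1 l2 p)%C)).
      - apply nn_lim; auto.
      - apply is_lim_seq_ext with (fun N => S2 N b + (-2 * l1) * Xs N t b + (2 * l2) * Ys N t b + (l1^2 + l2^2) * S2 N t).
        { intros; rewrite Hid; auto. }
        apply is_lim_seq_plus'; [apply is_lim_seq_plus'; [apply is_lim_seq_plus'|]|];
          try apply lim_scal; auto; apply nn_lim; auto. }
    pose proof (Hi _ (Ss' l1 l2)). unfold D at 1 in Hb. fold b in Hb. lra. }
  pose proof (nn_nonneg _ Lt) as HT.
  set (r := / (nn t + 1)).
  assert (Hr : 0 < r) by (apply Rinv_0_lt_compat; lra).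
  assert (Hr1 : r * (nn t + 1) = 1) by (unfold r; field; lra).
  specialize (Hvar (r * X) (- r * Y)).
  assert (HXY : X^2 + Y^2 <= 0).
  { assert (0 <= r * ((X^2 + Y^2) * (r * nn t - 2))) by nra.
    assert (0 <= (X^2 + Y^2) * (r * nn t - 2)).
    { apply (Rmult_le_reg_l r); auto. lra. }
    assert (r * nn t - 2 < 0) by nra. nra. }
  assert (X = 0) by nra. assert (Y = 0) by nra.
  apply orth_iff. split.
  - rewrite <- H. auto.
  - rewrite <- H1. auto.
Qed.
Open Scope nat_scope.

Definition t1 (m : nat * nat) : nat * nat := sigma_inv (Nat.add (fst m) 1, snd m).
Definition t2 (m : nat * nat) : nat * nat := (fst (Defs.sigma m), Nat.add (snd (Defs.sigma m)) 1).

Lemma sigma_inj m n : Defs.sigma m = Defs.sigma n -> m = n.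
Proof. intros H. rewrite <- (sigmaK m), <- (sigmaK n), H. auto. Qed.
Lemma t2_inj m n : t2 m = t2 n -> m = n.
Proof.
  unfold t2. intros H. injection H; intros. apply sigma_inj.
  rewrite (surjective_pairing (Defs.sigma m)), (surjective_pairing (Defs.sigma n)). f_equal; lia.
Qed.
Lemma t1_bot a : t1 (S a, 0%nat) = (a, 0%nat).
Proof.
  unfold t1. replace (Nat.add (fst (S a, 0)) 1, snd (S a, 0)) with (Defs.sigma (a, 0%nat)).
  apply sigmaK. simpl. destruct a; simpl; f_equal; lia.
Qed.
Lemma t1_00 : t1 (0%nat, 0%nat) = (0%nat, 1%nat).
Proof. reflexivity. Qed.
Lemma t2_col k : t2 (0%nat, S (S k)) = (0%nat, S k).
Proof. unfold t2. simpl. f_equal. lia. Qed.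
Lemma t2_01 : t2 (0%nat, 1%nat) = (1%nat, 1%nat).
Proof. reflexivity. Qed.
Lemma t2t1 m : t2 (t1 m) = (S (fst m), S (snd m)).
Proof. unfold t2, t1. rewrite sigma_invK. simpl. f_equal; lia. Qed.
Lemma t2t1' a b : t2 (t1 (a, b)) = (S a, S b).
Proof. apply t2t1. Qed.
Lemma t2_SS c d : exists x y, t2 (S c, S d) = (S x, S y).
Proof.
  exists (fst (t2 (S c, S d)) - 1), (snd (t2 (S c, S d)) - 1).
  assert (1 <= fst (t2 (S c,S d))).
  { unfold t2, Defs.sigma. destruct (Nat.leb (S d) (S c)); [|destruct (Nat.eqb (S c + 1) (S d))]; simpl; lia. }
  assert (1 <= snd (t2 (S c,S d))) by (unfold t2; simpl; lia).
  destruct (t2 (S c, S d)) as [x y]; simpl in *; f_equal; lia.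
Qed.
Lemma t2_range n : (1 <= snd n)%nat -> exists n', t2 n' = n.
Proof.
  intros H. exists (sigma_inv (fst n, snd n - 1)%nat). unfold t2. rewrite sigma_invK. simpl.
  destruct n; simpl in *; f_equal; lia.
Qed.
Lemma t1_range n : (forall k, n <> (0%nat, S (S k))) -> exists n', t1 n' = n.
Proof.
  intros H. exists (fst (Defs.sigma n) - 1, snd (Defs.sigma n))%nat. unfold t1. simpl fst. simpl snd.
  replace (fst (Defs.sigma n) - 1 + 1)%nat with (fst (Defs.sigma n)).
  - rewrite <- surjective_pairing. apply sigmaK.
  - destruct n as [a b]. unfold Defs.sigma.
    destruct (Nat.leb b a) eqn:E1; [simpl; lia|].
    destruct (Nat.eqb (a+1) b) eqn:E2; [simpl; lia|]. simpl.
    apply Nat.leb_gt in E1. apply Nat.eqb_neq in E2.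
    destruct a; [|lia]. exfalso. destruct b as [|[|b]]; try lia. apply (H b); auto.
Qed.

Lemma comb (Q : nat*nat -> nat*nat -> Prop)
 (HT1 : forall m n, Q (t1 m) (t1 n) <-> Q m n)
 (HT2 : forall m n, Q (t2 m) (t2 n) <-> Q m n)
 (Hsym : forall m n, Q m n -> Q n m)
 (HS2 : forall m a, Q (t2 m) (a, 0%nat))
 (HS1 : forall m k, Q (t1 m) (0%nat, S (S k))) :
 forall m n, m <> n -> Q m n.
Proof.
  assert (R2 : forall n a, (1 <= snd n)%nat -> Q n (a, 0%nat)).
  { intros n a H. destruct (t2_range n H) as [n' <-]. auto. }
  assert (R1 : forall n k, (forall k, n <> (0%nat, S (S k))) -> Q n (0%nat, S (S k))).
  { intros n k H. destruct (t1_range n H) as [n' <-]. auto. }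
  assert (B0 : forall c, Q (0%nat,0%nat) (S c, 0%nat)).
  { intros c. apply HT1. rewrite t1_00, t1_bot. apply R2. simpl; lia. }
  assert (Bot : forall a c, a <> c -> Q (a,0%nat) (c,0%nat)).
  { induction a; intros c Hac.
    - destruct c; [lia|]. auto.
    - destruct c; [auto|]. apply HT1. rewrite !t1_bot. apply IHa. lia. }
  assert (CA : forall a n, (a,0%nat) <> n -> Q (a,0%nat) n).
  { intros a [c d] H. destruct d.
    - apply Bot. intros ->. auto.
    - apply Hsym, R2. simpl; lia. }
  assert (C0 : forall j, Q (0%nat, 2%nat) (0%nat, S (S (S j)))).
  { intros j. apply HT2. rewrite !t2_col. apply R1. intros k E; inversion E. }
  assert (Col : forall k j, k <> j -> Q (0%nat, S (S k)) (0%nat, S (S j))).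
  { induction k; intros j Hkj.
    - destruct j; [lia|]. auto.
    - destruct j; [auto|]. apply HT2. rewrite !t2_col. apply IHk. lia. }
  assert (Base : forall m n, m <> n -> (fst m = 0 \/ snd m = 0)%nat -> Q m n).
  { intros [a b] n Hmn Hm. simpl in Hm. destruct Hm as [-> | ->]; [|auto].
    destruct b as [|[|k]]; [auto| |].
    - destruct n as [c [|d]]; [apply Hsym, CA; auto|].
      destruct c.
      + destruct d; [exfalso; auto|]. apply R1. intros k E; inversion E.
      + apply HT2. rewrite t2_01. destruct (t2_SS c d) as [x [y E]]. rewrite E.
        rewrite <- (t2t1' 0 0), <- (t2t1' x y). apply HT2, HT1.
        apply CA. intros E2. injection E2; intros; subst. rewrite <- t2_01 in E. apply t2_inj in E.
        inversion E.
    - destruct n as [c [|d]]; [apply Hsym, CA; auto|].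
      destruct (classic (exists j, (c, S d) = (0%nat, S (S j)))) as [[j Ej]|Hn].
      + rewrite Ej. apply Col. intros ->. auto.
      + apply Hsym, R1. intros j E. apply Hn. eauto. }
  assert (Gen : forall K m n, (fst m <= K)%nat -> m <> n -> Q m n).
  { induction K; intros m n HK Hmn.
    - apply Base; auto. left; lia.
    - destruct m as [[|a] [|b]]; try solve [apply Base; simpl; auto].
      destruct n as [[|c] [|d]]; try solve [apply Hsym, Base; simpl; auto; intros E; apply Hmn; auto].
      rewrite <- (t2t1' a b), <- (t2t1' c d). apply HT2, HT1. apply IHK.
      simpl in *; lia. intros E. apply Hmn. inversion E; auto. }
  intros m n. apply (Gen (fst m)). lia.
Qed.

Lemma connect {T} (c : nat*nat -> T) (H1 : forall m, c (t1 m) = c m) (H2 : forall m, c (t2 m) = c m) :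
  forall m, c m = c (0%nat,0%nat).
Proof.
  assert (Row : forall a, c (a,0%nat) = c (0%nat,0%nat)).
  { induction a; [reflexivity|]. rewrite <- IHa, <- (t1_bot a). rewrite H1. reflexivity. }
  assert (ColL : forall k, c (0%nat, S k) = c (0%nat,0%nat)).
  { induction k.
    - rewrite <- t1_00. rewrite H1. reflexivity.
    - rewrite <- IHk, <- (t2_col k). rewrite H2. reflexivity. }
  assert (Gen : forall a b, c (a,b) = c (0%nat,0%nat)).
  { induction a; intros b.
    - destruct b; [reflexivity| apply ColL].
    - destruct b; [apply Row|]. rewrite <- (IHa b), <- (t2t1' a b), H2, H1. reflexivity. }
  intros [a b]; auto.
Qed.
Close Scope nat_scope. Open Scope R_scope.

Definition ev (m : nat * nat) : vec := fun p =>
  if (Nat.eqb (fst p) (fst m) && Nat.eqb (snd p) (snd m))%bool then 1%C else 0%C.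
Lemma ev_case m q : (q = m /\ ev m q = 1%C) \/ (q <> m /\ ev m q = 0%C).
Proof.
  unfold ev. destruct q as [a b], m as [c d]; simpl.
  destruct (Nat.eqb_spec a c), (Nat.eqb_spec b d); simpl; subst; auto;
  right; split; auto; intros E; inversion E; auto.
Qed.
Lemma ev_same m : ev m m = 1%C.
Proof. destruct (ev_case m m) as [[_ H]|[H _]]; auto. exfalso; auto. Qed.
Lemma ev_other m q : q <> m -> ev m q = 0%C.
Proof. intros Hq. destruct (ev_case m q) as [[H _]|[_ H]]; auto. exfalso; auto. Qed.

Lemma rsq_zero N h : (forall p, h p = 0) -> rsq N h = 0.
Proof. intros H. unfold rsq. apply rsum_zero. intros. apply rsum_zero. intros; auto. Qed.

Lemma L2_ev m : L2 (ev m).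
Proof.
  exists 1. intros N. unfold S2.
  destruct (Compare_dec.lt_dec (fst m) N), (Compare_dec.lt_dec (snd m) N).
  - rewrite (rsq_single N _ m); auto. rewrite ev_same. unfold nq; simpl; lra.
    intros q Hq. rewrite ev_other; auto. unfold nq; simpl; ring.
  - rewrite rsq_ext with (g := fun _ => 0). rewrite rsq_zero; auto; lra.
    intros p H1 H2. rewrite ev_other. unfold nq; simpl; ring. intros ->; auto.
  - rewrite rsq_ext with (g := fun _ => 0). rewrite rsq_zero; auto; lra.
    intros p H1 H2. rewrite ev_other. unfold nq; simpl; ring. intros ->; auto.
  - rewrite rsq_ext with (g := fun _ => 0). rewrite rsq_zero; auto; lra.
    intros p H1 H2. rewrite ev_other. unfold nq; simpl; ring. intros ->; auto.
Qed.

Lemma tau1_t1 f n : tau1 f (t1 n) = f n.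
Proof.
  unfold tau1, Uadj, t1. rewrite sigma_invK. destruct n as [a b]. simpl fst; simpl snd.
  rewrite Nat.add_1_r. reflexivity.
Qed.
Lemma tau2_t2 f n : tau2 f (t2 n) = f n.
Proof.
  unfold tau2, t2. rewrite Nat.add_1_r. unfold Mz2, Uop.
  rewrite <- surjective_pairing, sigmaK. reflexivity.
Qed.
Lemma tau1_zero f k : tau1 f (0%nat, S (S k)) = 0%C.
Proof. reflexivity. Qed.
Lemma tau2_zero f a : tau2 f (a, 0%nat) = 0%C.
Proof. reflexivity. Qed.
Lemma tau1_sub f g : tau1 (fun p => f p - g p)%C = (fun p => tau1 f p - tau1 g p)%C.
Proof.
  apply functional_extensionality. intros q. unfold tau1, Uadj, Mz1.
  destruct (Defs.sigma q) as [[|a] b]; [|reflexivity].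
  apply injective_projections; simpl; ring.
Qed.
Lemma tau2_sub f g : tau2 (fun p => f p - g p)%C = (fun p => tau2 f p - tau2 g p)%C.
Proof.
  apply functional_extensionality. intros q. unfold tau2, Mz2, Uop.
  destruct q as [a [|b]]; [|reflexivity].
  apply injective_projections; simpl; ring.
Qed.
Lemma tau1_ev m : tau1 (ev m) = ev (t1 m).
Proof.
  apply functional_extensionality. intros q.
  destruct (ev_case (t1 m) q) as [[Hq Hv]|[Hq Hv]]; rewrite Hv.
  - subst. rewrite tau1_t1. apply ev_same.
  - unfold tau1, Uadj, Mz1. destruct (Defs.sigma q) as [[|a] b] eqn:Es; [reflexivity|].
    apply ev_other. intros E. apply Hq. rewrite <- (sigmaK q), Es. rewrite <- E. unfold t1. simpl fst. simpl snd. rewrite Nat.add_1_r. reflexivity.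
Qed.
Lemma tau2_ev m : tau2 (ev m) = ev (t2 m).
Proof.
  apply functional_extensionality. intros [a [|b]].
  - rewrite tau2_zero. rewrite ev_other; auto. unfold t2. intros E. inversion E. lia.
  - change (tau2 (ev m) (a, S b)) with (ev m (sigma_inv (a, b))).
    destruct (ev_case m (sigma_inv (a,b))) as [[Hq Hv]|[Hq Hv]]; rewrite Hv.
    + rewrite <- Hq. unfold t2. rewrite sigma_invK. simpl. rewrite Nat.add_1_r. symmetry; apply ev_same.
    + symmetry. apply ev_other. intros E. apply Hq. unfold t2 in E. inversion E.
      assert (Hs : Defs.sigma m = (a,b)) by (rewrite (surjective_pairing (Defs.sigma m)); f_equal; lia). rewrite <- H0, <- Hs. apply sigmaK.
Qed.

Lemma inner_e f g n : orth f (fun p => ev n p - g p)%C ->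
  is_lim_seq (fun N => Xs N f g) (fst (f n)) /\ is_lim_seq (fun N => Ys N f g) (snd (f n)).
Proof.
  intros H. apply orth_iff in H as [HX HY].
  assert (Box : forall N, (max (fst n) (snd n) < N)%nat ->
     Xs N f (fun p => ev n p - g p)%C = fst (f n) + (-1) * Xs N f g /\
     Ys N f (fun p => ev n p - g p)%C = snd (f n) + (-1) * Ys N f g).
  { intros N HN. split.
    - transitivity (rsq N (fun p => fst (f p) * fst (ev n p) + snd (f p) * snd (ev n p)) + (-1) * Xs N f g).
      + unfold Xs. rewrite <- rsq_scal, <- rsq_plus. apply rsq_ext'; intros; simpl; ring.
      + rewrite (rsq_single N _ n). rewrite ev_same; simpl; ring.
        intros q Hq; rewrite ev_other; auto; simpl; ring. lia. lia.
    - transitivity (rsq N (fun p => snd (f p) * fst (ev n p) - fst (f p) * snd (ev n p)) + (-1) * Ys N f g).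
      + unfold Ys. rewrite <- rsq_scal, <- rsq_plus. apply rsq_ext'; intros; simpl; ring.
      + rewrite (rsq_single N _ n). rewrite ev_same; simpl; ring.
        intros q Hq; rewrite ev_other; auto; simpl; ring. lia. lia. }
  split.
  - apply is_lim_seq_ext_loc with (fun N => fst (f n) + (-1) * Xs N f (fun p => ev n p - g p)%C).
    { exists (S (max (fst n) (snd n))). intros N HN. destruct (Box N) as [E _]. lia. rewrite E. ring. }
    assert (Hl := is_lim_seq_plus' _ _ _ _ (is_lim_seq_const (fst (f n))) (lim_scal _ _ (-1) HX)).
    replace (fst (f n) + -1 * 0) with (fst (f n)) in Hl by ring. exact Hl.
  - apply is_lim_seq_ext_loc with (fun N => snd (f n) + (-1) * Ys N f (fun p => ev n p - g p)%C).
    { exists (S (max (fst n) (snd n))). intros N HN. destruct (Box N) as [_ E]. lia. rewrite E. ring. }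
    assert (Hl := is_lim_seq_plus' _ _ _ _ (is_lim_seq_const (snd (f n))) (lim_scal _ _ (-1) HY)).
    replace (snd (f n) + -1 * 0) with (snd (f n)) in Hl by ring. exact Hl.
Qed.

Lemma herm am an m n : orth am (fun p => ev n p - an p)%C -> orth an (fun p => ev m p - am p)%C ->
  fst (am n) = fst (an m) /\ snd (am n) = - snd (an m).
Proof.
  intros H1 H2. apply inner_e in H1 as [X1 Y1]. apply inner_e in H2 as [X2 Y2]. split.
  - apply (lim_unique _ _ _ X1). apply is_lim_seq_ext with (fun N => Xs N an am); auto.
    intros; unfold Xs; apply rsq_ext'; intros; ring.
  - apply (lim_unique _ _ _ Y1). apply is_lim_seq_ext with (fun N => (-1) * Ys N an am).
    intros; unfold Ys; rewrite <- rsq_scal; apply rsq_ext'; intros; ring.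
    replace (- snd (an m)) with ((-1) * snd (an m)) by ring. apply lim_scal; auto.
Qed.

Lemma uniq_dec S x u w : closed_subspace S -> S u -> S w ->
  ortho_compl S (fun p => x p - u p)%C -> ortho_compl S (fun p => x p - w p)%C -> u = w.
Proof.
  intros HS Su Sw [_ Ou] [_ Ow].
  set (v := fun p => (1 * u p + (-1) * w p)%C).
  assert (Sv : S v) by (apply S_lin; auto).
  pose proof (Ou v Sv) as HU. apply orth_iff in HU. destruct HU as [XU _].
  pose proof (Ow v Sv) as HW. apply orth_iff in HW. destruct HW as [XW _].
  assert (L : is_lim_seq (fun N => S2 N v) 0).
  { apply is_lim_seq_ext with (fun N => Xs N v (fun p => x p - w p)%C + (-1) * Xs N v (fun p => x p - u p)%C).
    { intros N. unfold S2, Xs. rewrite <- rsq_scal, <- rsq_plus. apply rsq_ext'. intros p.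
      unfold v, nq; simpl; ring. }
    replace 0 with (0 + (-1) * 0) by ring. apply is_lim_seq_plus'; auto. apply lim_scal; auto. }
  apply functional_extensionality. intros p.
  assert (H0 : S2 (Nat.succ (max (fst p) (snd p))) v <= 0).
  { apply (lim_ge _ _ (Nat.succ (max (fst p) (snd p))) _ L). intros; apply S2_mono; auto. }
  assert (H1 : nq (v p) <= 0).
  { eapply Rle_trans; [|apply H0]. unfold S2.
    apply (rsq_term _ (fun p => nq (v p))); [intros; apply nq_nonneg| apply Nat.lt_succ_r, Nat.le_max_l | apply Nat.lt_succ_r, Nat.le_max_r]. }
  assert (fst (v p) = 0 /\ snd (v p) = 0) as [F1 F2] by (unfold nq in H1; nra).
  unfold v in F1, F2; simpl in F1, F2. apply injective_projections; lra.
Qed.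

Lemma trunc_closure S : closed_subspace S -> (forall m, S (ev m)) -> forall f, L2 f -> S f.
Proof.
  intros HS He f Hf. pose proof HS as [Hl2 [H0 [Hadd [Hsc Hcl]]]].
  set (row := fun I J => fun p => if (Nat.eqb (fst p) I && Nat.ltb (snd p) J)%bool then f p else 0%C).
  assert (Srow : forall I J, S (row I J)).
  { intros I J. induction J.
    - apply (S_ext S zero_vec); auto. intros [a b]. unfold row, zero_vec; simpl.
      destruct (Nat.eqb a I); reflexivity.
    - apply (S_ext S (fun p => 1 * row I J p + f (I, J) * ev (I, J) p)%C); [|apply S_lin; auto].
      intros [a b]. unfold row, ev; simpl.
      destruct (Nat.eqb_spec a I), (Nat.ltb_spec b J), (Nat.ltb_spec b (Datatypes.S J)), (Nat.eqb_spec b J);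
        subst; simpl; try lia; apply injective_projections; simpl; ring. }
  set (blk := fun I J => fun p => if (Nat.ltb (fst p) I && Nat.ltb (snd p) J)%bool then f p else 0%C).
  assert (Sblk : forall I J, S (blk I J)).
  { intros I J. induction I.
    - apply (S_ext S zero_vec); [intros [a b]; reflexivity | auto].
    - apply (S_ext S (fun p => 1 * blk I J p + 1 * row I J p)%C); [|apply S_lin; auto].
      intros [a b]. unfold row, blk; simpl.
      destruct (Nat.eqb_spec a I), (Nat.ltb_spec a I), (Nat.ltb_spec a (Datatypes.S I)), (Nat.ltb_spec b J);
        subst; simpl; try lia; apply injective_projections; simpl; ring. }
  apply (Hcl (fun K => blk K K)); auto. apply l2_L2; auto.
  intros eps Heps. pose proof (nn_lim f Hf) as Hl. apply is_lim_seq_Reals in Hl.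
  destruct (Hl eps Heps) as [K HK]. exists K. intros n N Hn.
  specialize (HK n ltac:(lia)). unfold R_dist in HK. pose proof (nn_ge f n Hf).
  erewrite rsq_ext'; [|intros; apply Cmod2]. fold (S2 N (fun p => blk n n p - f p)%C).
  assert (Hin : forall p, (fst p < n)%nat -> (snd p < n)%nat -> blk n n p = f p).
  { intros [a b] H1 H2. unfold blk; simpl in *. destruct (Nat.ltb_spec a n), (Nat.ltb_spec b n); try lia. reflexivity. }
  destruct (Nat.le_gt_cases N n).
  - unfold S2. rewrite rsq_ext with (g := fun _ => 0). rewrite rsq_zero; auto.
    rewrite Rabs_left1 in HK; lra.
    intros p Hp1 Hp2. rewrite Hin by lia. unfold nq; simpl; ring.
  - assert (E : S2 N (fun p => blk n n p - f p)%C = S2 N f + (-1) * S2 N (blk n n)).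
    { unfold S2. rewrite <- rsq_scal, <- rsq_plus. apply rsq_ext'. intros [a b]. unfold blk; simpl.
      destruct (Nat.ltb a n), (Nat.ltb b n); simpl; unfold nq; simpl; ring. }
    assert (E2 : S2 n (blk n n) = S2 n f).
    { unfold S2. apply rsq_ext. intros p Hp1 Hp2. rewrite Hin; auto. }
    pose proof (S2_mono (blk n n) n N ltac:(lia)). pose proof (nn_ge f N Hf).
    rewrite Rabs_left1 in HK; lra.
Qed.

Theorem lemma3p9 :
  forall S : vec -> Prop,
    closed_subspace S -> reduces tau1 S -> reduces tau2 S ->
    (forall f, S f -> f = zero_vec) \/ (forall f, l2 f -> S f).
Proof.
  intros S HS [I1 J1] [I2 J2].
  pose proof HS as [Hl2 [H0 [Hadd [Hsc Hcl]]]].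
  assert (HA : forall m, exists a, S a /\ ortho_compl S (fun p => ev m p - a p)%C).
  { intros m. destruct (proj_thm S (ev m) HS (L2_ev m)) as [a [Sa [La Oa]]].
    exists a. split; auto. split; auto. apply l2_L2; auto. }
  set (A := fun m => proj1_sig (constructive_indefinite_description _ (HA m))).
  assert (HA' : forall m, S (A m) /\ ortho_compl S (fun p => ev m p - A m p)%C).
  { intros; unfold A; destruct constructive_indefinite_description; simpl; auto. }
  assert (A1 : forall m, A (t1 m) = tau1 (A m)).
  { intros m. apply (uniq_dec S (ev (t1 m))); auto; [apply HA'| apply I1, HA' | apply HA' |].
    assert (E : (fun p => ev (t1 m) p - tau1 (A m) p)%C = tau1 (fun p => ev m p - A m p)%C)
      by (rewrite tau1_sub, tau1_ev; reflexivity).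
    rewrite E. apply J1, HA'. }
  assert (A2 : forall m, A (t2 m) = tau2 (A m)).
  { intros m. apply (uniq_dec S (ev (t2 m))); auto; [apply HA'| apply I2, HA' | apply HA' |].
    assert (E : (fun p => ev (t2 m) p - tau2 (A m) p)%C = tau2 (fun p => ev m p - A m p)%C)
      by (rewrite tau2_sub, tau2_ev; reflexivity).
    rewrite E. apply J2, HA'. }
  assert (Orth : forall m n, orth (A m) (fun p => ev n p - A n p)%C).
  { intros m n. destruct (HA' n) as [_ [_ H]]. apply H, HA'. }
  assert (Hdiag : forall m n, m <> n -> A m n = 0%C).
  { apply (comb (fun m n => A m n = 0%C)).
    - intros m n. rewrite A1, tau1_t1. tauto.
    - intros m n. rewrite A2, tau2_t2. tauto.
    - intros m n H. destruct (herm (A m) (A n) m n (Orth m n) (Orth n m)) as [F1 F2].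
      rewrite H in F1, F2. simpl in F1, F2. apply injective_projections; simpl; lra.
    - intros m a. rewrite A2. apply tau2_zero.
    - intros m k. rewrite A1. apply tau1_zero. }
  assert (Aform : forall m, A m = (fun p => A m m * ev m p)%C).
  { intros m. apply functional_extensionality. intros p.
    destruct (ev_case m p) as [[-> Hv]|[Hne Hv]]; rewrite Hv.
    - apply injective_projections; simpl; ring.
    - rewrite Hdiag by auto. apply injective_projections; simpl; ring. }
  set (c := fun m => A m m).
  assert (Hc1 : forall m, c (t1 m) = c m) by (intros; unfold c; rewrite A1, tau1_t1; auto).
  assert (Hc2 : forall m, c (t2 m) = c m) by (intros; unfold c; rewrite A2, tau2_t2; auto).
  pose proof (connect c Hc1 Hc2) as Hcon.
  set (m0 := (0%nat, 0%nat)).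
  assert (H01 : c m0 = 0%C \/ c m0 = 1%C).
  { destruct (inner_e (A m0) (A m0) m0 (Orth m0 m0)) as [LX LY].
    assert (Hy : snd (A m0 m0) = 0).
    { apply (lim_unique _ _ _ LY). apply is_lim_seq_ext with (fun _ => 0).
      intros N. unfold Ys. rewrite rsq_zero; auto. intros; ring. apply is_lim_seq_const. }
    assert (Hx : fst (A m0 m0) = nq (A m0 m0)).
    { apply (lim_unique _ _ _ LX). apply is_lim_seq_incr_1.
      apply is_lim_seq_ext with (fun _ => nq (A m0 m0)); [|apply is_lim_seq_const].
      intros N. unfold Xs. rewrite (rsq_single _ _ m0); [unfold nq; simpl; ring| | simpl; lia| simpl; lia].
      intros q Hq. rewrite (Aform m0). simpl. rewrite ev_other by auto. simpl. ring. }
    unfold nq in Hx. rewrite Hy in Hx. unfold c.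
    assert (fst (A m0 m0) = 0 \/ fst (A m0 m0) = 1) as [Z|Z] by (apply Rmult_integral_contrapositive_currified_inv_or; nra) || nra.
    - left. apply injective_projections; simpl; auto.
    - right. apply injective_projections; simpl; auto. }
  destruct H01 as [Hz | Ho].
  - left. intros f Sf. apply functional_extensionality. intros m.
    assert (Am : A m = zero_vec).
    { rewrite Aform. apply functional_extensionality. intros p. unfold zero_vec.
      change (A m m) with (c m). rewrite Hcon. fold m0. rewrite Hz. apply injective_projections; simpl; ring. }
    destruct (HA' m) as [_ [_ Om]]. specialize (Om f Sf).
    destruct (inner_e f (A m) m Om) as [LX LY].
    rewrite Am in LX, LY.
    assert (F1 : fst (f m) = 0).
    { apply (lim_unique _ _ _ LX). apply is_lim_seq_ext with (fun _ => 0); [|apply is_lim_seq_const].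
      intros N. unfold Xs. rewrite rsq_zero; auto. intros; unfold zero_vec; simpl; ring. }
    assert (F2 : snd (f m) = 0).
    { apply (lim_unique _ _ _ LY). apply is_lim_seq_ext with (fun _ => 0); [|apply is_lim_seq_const].
      intros N. unfold Ys. rewrite rsq_zero; auto. intros; unfold zero_vec; simpl; ring. }
    unfold zero_vec. apply injective_projections; simpl; auto.
  - right. intros f Hf. apply (trunc_closure S HS); [|apply l2_L2; auto].
    intros m. apply (S_ext S (A m)); [|apply HA'].
    intros p. rewrite Aform. change (A m m) with (c m). rewrite Hcon. fold m0. rewrite Ho.
    apply injective_projections; simpl; ring.
Qed.
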